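(* Let $U$ be a convex $2n$-gon with distinct vertices $U_1,\dots,U_{2n}$ in counterclockwise order, centered at the origin ($U_{i+n}=-U_i$, indices modulo $2n$), and let $P$ be a convex polygon with nonempty interior whose vertex list is $P_1,\dots,P_{2n}$ (consecutive entries may coincide) such that corresponding sides and diagonals are parallel: $P_{i+1}-P_i=\lambda_{i+\frac12}(U_{i+1}-U_i)$ with $\lambda_{i+\frac12}\ge0$, and $P_i-P_{i+n}$ is parallel to $U_i-U_{i+n}$, for all $i$. Then, in the Minkowski plane $(\mathbb{R}^2,U)$, $P$ has constant $U$-width.
   Context: The Minkowski plane $(\mathbb{R}^2,U)$ is $\mathbb{R}^2$ with the norm whose unit ball is $U$. The dual norm is identified with $\|v\|=\sup\{[u,v]:u\in U\}$, where $[x,y]$ is the determinant of the matrix with columns $x,y$; its unit ball is the dual unit ball. For $v$ in the dual unit circle ($\|v\|=1$), the support function of $P$ is $h(P)(v)=\sup\{[p,v]:p\in P\}$ and the width of $P$ in direction $v$ is $w(P)(v)=h(P)(v)+h(P)(-v)$. $P$ has constant $U$-width if $w(P)(v)$ does not depend on $v$. *)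

(* Defs.v *)
From HB Require Import structures.
From mathcomp Require Import all_boot all_order all_algebra.
From mathcomp Require Import classical_sets reals.
Set Implicit Arguments. Unset Strict Implicit. Unset Printing Implicit Defensive.
Import Order.TTheory GRing.Theory Num.Theory.
Local Open Scope ring_scope.
Local Open Scope classical_set_scope.

Section Plane.
Variable R : realType.

Definition psub (p q : R * R) : R * R := (p.1 - q.1, p.2 - q.2).
Definition popp (p : R * R) : R * R := (- p.1, - p.2).
Definition pscale (a : R) (p : R * R) : R * R := (a * p.1, a * p.2).

Definition det (x y : R * R) : R := x.1 * y.2 - x.2 * y.1.

Definition conv_hull (m : nat) (Q : nat -> R * R) : set (R * R) :=
  [set p | exists w : nat -> R,
      (forall k, 0 <= w k) /\ \sum_(k < m) w k = 1 /\
      p = (\sum_(k < m) w k * (Q k).1, \sum_(k < m) w k * (Q k).2)].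

Definition dual_norm (U : set (R * R)) (v : R * R) : R :=
  sup [set det u v | u in U].

Definition support (P : set (R * R)) (v : R * R) : R :=
  sup [set det p v | p in P].

Definition width (P : set (R * R)) (v : R * R) : R :=
  support P v + support P (popp v).

Definition constant_width (U P : set (R * R)) : Prop :=
  exists c : R, forall v, dual_norm U v = 1 -> width P v = c.

End Plane.

(* Main.v *)
Require Import Defs.
From HB Require Import structures.
From mathcomp Require Import all_boot all_order all_algebra.
From mathcomp Require Import ring lra zify.
From mathcomp Require Import classical_sets reals.
Set Implicit Arguments. Unset Strict Implicit.
Import Order.TTheory GRing.Theory Num.Theory.
Local Open Scope classical_set_scope.
Local Open Scope ring_scope.

Lemma periodic_mod (R : realType) (N : nat) (Q : nat -> R * R) :
  (forall i, Q (i + N)%N = Q i) -> forall k, Q k = Q (k %% N)%N.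
Proof.
move=> h k; rewrite {1}(divn_eq k N); elim: (k %/ N)%N => [|q IH].
  by rewrite mul0n add0n.
have -> : (q.+1 * N + k %% N = (q * N + k %% N) + N)%N by rewrite mulSn; lia.
by rewrite h.
Qed.

Lemma neq_mod (N i x y a b : nat) : a = (i + x)%N -> b = (i + y)%N ->
  (x < N)%N -> (y < N)%N -> x != y -> (a %% N != b %% N)%N.
Proof.
move=> -> -> hx hy hxy; rewrite eqn_modDl !modn_small //.
Qed.

Lemma cone (R : realType) (a b c z v : R * R) :
  0 < det (psub b a) (psub c a) -> 0 < det (psub b a) (psub z a) ->
  0 < det (psub c b) (psub z b) -> det b v - det a v <= 0 ->
  0 < det c v - det b v -> det b v < det z v.
Proof.
case: a => a1 a2; case: b => b1 b2; case: c => c1 c2; case: z => z1 z2;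
case: v => v1 v2; rewrite /det /psub /=.
move=> hA hB hC hD hE; nra.
Qed.

Lemma det_subl (R : realType) (a b v : R * R) : det (psub a b) v = det a v - det b v.
Proof. rewrite /det /psub /=; ring. Qed.
Lemma det_scalel (R : realType) (l : R) (a v : R * R) : det (pscale l a) v = l * det a v.
Proof. rewrite /det /pscale /=; ring. Qed.
Lemma det_oppl (R : realType) (a v : R * R) : det (popp a) v = - det a v.
Proof. rewrite /det /popp /=; ring. Qed.
Lemma det_oppr (R : realType) (a v : R * R) : det a (popp v) = - det a v.
Proof. rewrite /det /popp /=; ring. Qed.

Lemma step (R : realType) (p0 p1 q0 q1 u0 u1 : R * R) (mu lam lam' : R) :
 psub p0 q0 = pscale (2*mu) u0 ->
 psub p1 p0 = pscale lam (psub u1 u0) ->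
 psub q1 q0 = pscale lam' (psub (popp u1) (popp u0)) ->
 det (psub p1 q1) (psub u1 (popp u1)) = 0 ->
 0 < det u0 u1 ->
 psub p1 q1 = pscale (2*mu) u1.
Proof.
case: p0 => a0 b0; case: p1 => a1 b1; case: q0 => c0 d0; case: q1 => c1 d1;
case: u0 => x0 y0; case: u1 => x1 y1.
rewrite /psub /pscale /popp /det /= => -[e1 e2] [e3 e4] [e5 e6] hd hpos.
have ha1 : a1 = c0 + 2 * mu * x0 + lam * (x1 - x0) by lra.
have hb1 : b1 = d0 + 2 * mu * y0 + lam * (y1 - y0) by lra.
have hc1 : c1 = c0 + lam' * (- x1 - - x0) by lra.
have hd1 : d1 = d0 + lam' * (- y1 - - y0) by lra.
rewrite ha1 hb1 hc1 hd1 in hd *.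
have : (2 * mu - (lam + lam')) * (2 * (x0 * y1 - y0 * x1)) = 0.
  by rewrite -hd; ring.
move/eqP; rewrite mulf_eq0 => /orP [/eqP hL|]; last by move=> /eqP h; exfalso; lra.
have -> : lam' = 2 * mu - lam by lra.
congr pair; ring.
Qed.
Lemma support_hull (R : realType) (m k0 : nat) (Q : nat -> R * R) (v : R * R) :
  (k0 < m)%N -> (forall k, (k < m)%N -> det (Q k) v <= det (Q k0) v) ->
  Defs.support (conv_hull m Q) v = det (Q k0) v.
Proof.
move=> hk0 hmax.
rewrite /Defs.support; set E := (X in sup X).
have ub : ubound E (det (Q k0) v).
  move=> x [p [w [w0 [w1 ->]]] <-].
  rewrite /det /= !big_distrl /= -sumrB.
  apply: le_trans (_ : \sum_(k < m) w k * det (Q k0) v <= _).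
    apply: ler_sum => k _; rewrite -!mulrA -mulrBr; apply: ler_wpM2l => //.
    exact: hmax.
  by rewrite -big_distrl /= w1 mul1r.
have inE : E (det (Q k0) v).
  exists (Q k0) => //.
  exists (fun k => if k == k0 then 1 else 0); split; first by move=> k; case: ifP.
  rewrite (bigD1 (Ordinal hk0)) //= eqxx big1 ?addr0; last first.
    by move=> [k hk] /=; rewrite -val_eqE /= => /negbTE ->.
  split=> //.
  rewrite (bigD1 (Ordinal hk0)) //= eqxx big1 ?addr0; last first.
    by move=> [k hk] /=; rewrite -val_eqE /= => /negbTE ->; rewrite mul0r.
  rewrite (bigD1 (Ordinal hk0)) //= eqxx big1 ?addr0; last first.
    by move=> [k hk] /=; rewrite -val_eqE /= => /negbTE ->; rewrite mul0r.
  by rewrite !mul1r; case: (Q k0).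
apply/le_anti/andP; split.
  by apply: ge_sup => //; exists (det (Q k0) v).
by apply: ub_le_sup => //; exists (det (Q k0) v).
Qed.

Lemma argmax_ex (R : realType) (N : nat) (h : nat -> R) : (0 < N)%N ->
  exists i, (i < N)%N /\ forall k, (k < N)%N -> h k <= h i.
Proof.
case: N => // N _; elim: N => [|N [i [hi IH]]].
  by exists 0%N; split => // k; rewrite ltnS leqn0 => /eqP ->.
have [le|lt] := leP (h N.+1) (h i).
  exists i; split; first by apply: ltn_trans hi _.
  move=> k; rewrite ltnS leq_eqVlt => /orP [/eqP ->|] //; exact: IH.
exists N.+1; split => // k; rewrite ltnS leq_eqVlt => /orP [/eqP -> //|hk].
by apply: le_trans (IH _ hk) (ltW lt).
Qed.

Lemma mono_chain (R : realType) (h : nat -> R) (b n : nat) :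
  (forall t, (t < n)%N -> h (b + t).+1 <= h (b + t)%N) ->
  forall t, (t <= n)%N -> h (b + n)%N <= h (b + t)%N /\ h (b + t)%N <= h b.
Proof.
move=> hd t ht; split.
  have : forall s, (s <= n)%N -> h (b + n)%N <= h (b + (n - s))%N.
    elim => [|s IH] hs; first by rewrite subn0.
    have := hd (n - s.+1)%N ltac:(lia).
    move: (IH (ltnW hs)); rewrite (_ : (b + (n - s) = (b + (n - s.+1)).+1)%N); last by lia.
    by move=> h1 h2; apply: le_trans h1 h2.
  move=> /(_ (n - t)%N (leq_subr _ _)).
  by rewrite (_ : (n - (n - t) = t)%N) //; lia.
elim: t ht => [|t IH] ht; first by rewrite addn0.
rewrite addnS; apply: le_trans (hd t ht) (IH (ltnW ht)).
Qed.

Lemma base_alg (R : realType) (d u0 u1 : R * R) :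
  det d (psub u0 (popp u0)) = 0 -> 0 < det u0 u1 ->
  d = pscale (2 * (det d u1 / (2 * det u0 u1))) u0.
Proof.
case: d => d1 d2; case: u0 => x0 y0; case: u1 => x1 y1.
rewrite /det /psub /popp /pscale /= => hd ha.
have anz : x0 * y1 - y0 * x1 != 0 by rewrite gt_eqF.
have E : d1 * y0 = d2 * x0 by lra.
have h2 : forall y : R, 2 * (y / (2 * (x0 * y1 - y0 * x1))) = y / (x0 * y1 - y0 * x1).
  by move=> y; field; rewrite anz.
rewrite !h2; congr pair.
  rewrite -[X in X = _](mulfK anz).
  have -> : d1 * (x0 * y1 - y0 * x1) = (d1 * y1 - d2 * x1) * x0 + x1 * (d2 * x0 - d1 * y0) by ring.
  by rewrite E subrr mulr0 addr0 mulrAC.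
rewrite -[X in X = _](mulfK anz).
have -> : d2 * (x0 * y1 - y0 * x1) = (d1 * y1 - d2 * x1) * y0 + y1 * (d2 * x0 - d1 * y0) by ring.
by rewrite E subrr mulr0 addr0 mulrAC.
Qed.

Theorem lemma2p4 (R : realType) (n : nat) (U P : nat -> R * R)
  (hn : (2 <= n)%N)
  (hUper : forall i, U (i + 2 * n)%N = U i)
  (hPper : forall i, P (i + 2 * n)%N = P i)
  (hUsym : forall i, U (i + n)%N = popp (U i))
  (hUconv : forall i j : nat, (j %% (2 * n) != i %% (2 * n))%N ->
      (j %% (2 * n) != i.+1 %% (2 * n))%N ->
      0 < det (psub (U i.+1) (U i)) (psub (U j) (U i)))
  (hPint : exists i j k, det (psub (P j) (P i)) (psub (P k) (P i)) != 0)
  (hside : forall i, exists lam : R,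
      0 <= lam /\ psub (P i.+1) (P i) = pscale lam (psub (U i.+1) (U i)))
  (hdiag : forall i,
      det (psub (P i) (P (i + n)%N)) (psub (U i) (U (i + n)%N)) = 0) :
  constant_width (conv_hull (2 * n) U) (conv_hull (2 * n) P).
Proof.
have N0 : (0 < 2 * n)%N by lia.
have Umod := periodic_mod hUper.
have Pmod := periodic_mod hPper.
have hcons k : 0 < det (U k) (U k.+1).
  have := hUconv k (k + n)%N _ _.
  rewrite hUsym /det /psub /popp /= => H.
  have : 0 < (2 : R) * ((U k).1 * (U k.+1).2 - (U k).2 * (U k.+1).1).
    apply: lt_le_trans (H _ _) _.
    - by apply: (neq_mod (i:=k) (x:=n) (y:=0%N)); lia.
    - by apply: (neq_mod (i:=k) (x:=n) (y:=1%N)); lia.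
    - lra.
  lra.

have [mu hmu] : exists mu : R, forall k, psub (P k) (P (k + n)%N) = pscale (2 * mu) (U k).
  have hd0 := hdiag 0%N; rewrite add0n in hd0.
  have hU0 := hUsym 0%N; rewrite add0n in hU0.
  rewrite hU0 in hd0.
  exists (det (psub (P 0%N) (P n)) (U 1%N) / (2 * det (U 0%N) (U 1%N))).
  elim => [|k IH]; first by rewrite add0n; apply: base_alg => //; exact: hcons.
  have [lam [_ hl]] := hside k.
  have [lam' [_ hl']] := hside (k + n)%N.
  rewrite -addSn !hUsym in hl'.
  have hdk := hdiag k.+1; rewrite hUsym in hdk.
  exact: (step IH hl hl' hdk (hcons k)).
exists (2 * mu) => v hv.
pose g k := det (U k) v. pose f k := det (P k) v.
have [i [hi gmax0]] := argmax_ex g N0.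
have gmax k : g k <= g i by rewrite /g (Umod k); apply: gmax0; exact: ltn_pmod.
have gsym k : g (k + n)%N = - g k by rewrite /g hUsym det_oppl.
have gmin k : g (i + n)%N <= g k by have := gmax (k + n)%N; rewrite !gsym; lra.
have Uni : forall t, (t < n)%N -> g (i + t).+1 <= g (i + t)%N.
  elim => [|t IH] ht; first by rewrite addn0; apply: gmax.
  have IH' := IH (ltnW ht).
  rewrite addnS leNgt; apply/negP => hlt.
  have [e|ne] := eqVneq t.+2 n.
    move: hlt; rewrite (_ : ((i + t).+2 = i + n)%N); last by lia.
    by have := gmin (i + t).+1; lra.
  have A := hUconv (i + t) (i + t).+2
    ltac:(apply: (neq_mod (i:=i) (x:=t.+2) (y:=t)); lia)
    ltac:(apply: (neq_mod (i:=i) (x:=t.+2) (y:=t.+1)); lia).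
  have B := hUconv (i + t) (i + n)
    ltac:(apply: (neq_mod (i:=i) (x:=n) (y:=t)); lia)
    ltac:(apply: (neq_mod (i:=i) (x:=n) (y:=t.+1)); lia).
  have C := hUconv (i + t).+1 (i + n)
    ltac:(apply: (neq_mod (i:=i) (x:=n) (y:=t.+1)); lia)
    ltac:(apply: (neq_mod (i:=i) (x:=n) (y:=t.+2)); lia).
  have D : det (U (i + t).+1) v - det (U (i + t)%N) v <= 0 by rewrite /g in IH'; lra.
  have E : 0 < det (U (i + t).+2) v - det (U (i + t).+1) v by rewrite /g in hlt; lra.
  have := cone A B C D E; have := gmin (i + t).+1; rewrite /g; lra.
have fstep m : exists lam, 0 <= lam /\ f m.+1 - f m = lam * (g m.+1 - g m).
  have [lam [hl he]] := hside m; exists lam; split => //.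
  by rewrite /f /g -!det_subl he det_scalel.
have fdec t : (t < n)%N -> f (i + t).+1 <= f (i + t)%N.
  move=> ht; have [lam [hl he]] := fstep (i + t)%N; have := Uni t ht => hu.
  have : lam * (g (i + t).+1 - g (i + t)%N) <= 0 by apply: mulr_ge0_le0 => //; lra.
  lra.
have finc t : (t < n)%N -> - f (i + n + t).+1 <= - f (i + n + t)%N.
  move=> ht; have [lam [hl he]] := fstep (i + n + t)%N; have := Uni t ht => hu.
  have e1 : g (i + n + t)%N = - g (i + t)%N by rewrite -gsym addnAC.
  have e2 : g (i + n + t).+1 = - g (i + t).+1.
    by rewrite -gsym (_ : ((i + n + t).+1 = (i + t).+1 + n)%N) //; lia.
  rewrite e1 e2 in he.
  have : 0 <= lam * (- g (i + t).+1 - - g (i + t)%N) by apply: mulr_ge0 => //; lra.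
  lra.
have fb k : f (i + n)%N <= f k /\ f k <= f i.
  set s := ((k + (2 * n - i)) %% (2 * n))%N.
  have hs : (s < 2 * n)%N by apply: ltn_pmod.
  have Pk : P k = P (i + s)%N.
    rewrite (Pmod k) (Pmod (i + s)%N) /s modnDmr.
    by rewrite (_ : (i + (k + (2 * n - i)) = k + 2 * n)%N) ?modnDr //; lia.
  rewrite /f Pk -/(f (i + s)%N).
  have [hsn|hsn] := leqP s n; first exact: mono_chain fdec s hsn.
  have := mono_chain (h := fun k => - f k) finc (t := (s - n)%N) ltac:(lia).
  rewrite /= (_ : (i + n + (s - n) = i + s)%N); last by lia.
  rewrite (_ : (i + n + n = i + 2 * n)%N); last by lia.
  by rewrite /f hPper; lra.
have hsP : Defs.support (conv_hull (2 * n) P) v = f i.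
  by apply: support_hull => // k _; case: (fb k).
have hsPm : Defs.support (conv_hull (2 * n) P) (popp v) = det (P ((i + n) %% (2 * n))%N) (popp v).
  apply: support_hull; first exact: ltn_pmod.
  by move=> k _; rewrite -Pmod !det_oppr; case: (fb k) => h1 _; rewrite /f in h1; lra.
have hsU : Defs.support (conv_hull (2 * n) U) v = g i.
  by apply: support_hull => // k _; apply: gmax.
change (Defs.support (conv_hull (2 * n) U) v = 1) in hv.
rewrite hsU in hv.
rewrite /width hsP hsPm -Pmod det_oppr /f.
have := hmu i; move/(congr1 (fun p => det p v)); rewrite det_subl det_scalel -/(g i) hv.
lra.
Qed.
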